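(* Every free adequate semigroup and every free adequate monoid is $\mathcal{J}$-trivial, i.e. no two distinct elements generate the same principal two-sided ideal.
   Context: For a semigroup $S$ let $S^1=S$ if $S$ is a monoid and otherwise $S$ with an identity adjoined. $a\,\mathcal{L}^*\,b$ iff for all $x,y\in S^1$: $ax=ay\Leftrightarrow bx=by$; $a\,\mathcal{R}^*\,b$ iff for all $x,y\in S^1$: $xa=ya\Leftrightarrow xb=yb$. $S$ is adequate if its idempotents commute and every $\mathcal{L}^*$-class and every $\mathcal{R}^*$-class contains an idempotent (necessarily unique); $x^+$ is the idempotent $\mathcal{R}^*$-related to $x$, $x^*$ the idempotent $\mathcal{L}^*$-related to $x$. Adequate semigroups [monoids] are viewed as $(2,1,1)$-algebras [$(2,1,1,0)$-algebras], morphisms preserving all operations. The free adequate semigroup [monoid] on a set $\Sigma$ is an adequate semigroup [monoid] containing $\Sigma$ such that every map from $\Sigma$ to an adequate semigroup [monoid] extends uniquely to a morphism. Two elements $a,b$ are $\mathcal{J}$-related if $S^1aS^1=S^1bS^1$. *)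

(* Defs.v *)
Section Green.
Variable (S : Type) (mul : S -> S -> S).

(* Right/left multiplication by an element of S^1 = option S,
   where None is the identity adjoined to S. *)
Definition rmul1 (a : S) (x : option S) : S :=
  match x with None => a | Some x => mul a x end.
Definition lmul1 (x : option S) (a : S) : S :=
  match x with None => a | Some x => mul x a end.

Definition Lstar (a b : S) : Prop :=
  forall x y : option S, rmul1 a x = rmul1 a y <-> rmul1 b x = rmul1 b y.

Definition Rstar (a b : S) : Prop :=
  forall x y : option S, lmul1 x a = lmul1 y a <-> lmul1 x b = lmul1 y b.

Definition in_ideal (b a : S) : Prop :=
  exists x y : option S, b = lmul1 x (rmul1 a y).

Definition Jrel (a b : S) : Prop := in_ideal a b /\ in_ideal b a.

Definition J_trivial : Prop := forall a b : S, Jrel a b -> a = b.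

End Green.

Record AdequateSemigroup := {
  carrier :> Type;
  mul : carrier -> carrier -> carrier;
  plus : carrier -> carrier;
  star : carrier -> carrier;
  mulA : forall x y z, mul x (mul y z) = mul (mul x y) z;
  idem_comm : forall e f, mul e e = e -> mul f f = f -> mul e f = mul f e;
  plus_idem : forall x, mul (plus x) (plus x) = plus x;
  plus_Rstar : forall x, Rstar carrier mul (plus x) x;
  star_idem : forall x, mul (star x) (star x) = star x;
  star_Lstar : forall x, Lstar carrier mul (star x) x
}.

Definition adequate_morph (S T : AdequateSemigroup) (h : S -> T) : Prop :=
  (forall x y, h (mul S x y) = mul T (h x) (h y)) /\
  (forall x, h (plus S x) = plus T (h x)) /\
  (forall x, h (star S x) = star T (h x)).

Record AdequateMonoid := {
  asg :> AdequateSemigroup;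
  one : asg;
  mul1x : forall x, mul asg one x = x;
  mulx1 : forall x, mul asg x one = x
}.

Definition adequate_monoid_morph (M N : AdequateMonoid) (h : M -> N) : Prop :=
  adequate_morph M N h /\ h (one M) = one N.

Definition is_free_adequate_semigroup (Sigma : Type) (S : AdequateSemigroup)
    (iota : Sigma -> S) : Prop :=
  forall (T : AdequateSemigroup) (f : Sigma -> T),
    exists h : S -> T,
      (adequate_morph S T h /\ forall s, h (iota s) = f s) /\
      (forall h' : S -> T, adequate_morph S T h' ->
         (forall s, h' (iota s) = f s) -> forall x, h' x = h x).

Definition is_free_adequate_monoid (Sigma : Type) (M : AdequateMonoid)
    (iota : Sigma -> M) : Prop :=
  forall (N : AdequateMonoid) (f : Sigma -> N),
    exists h : M -> N,
      (adequate_monoid_morph M N h /\ forall s, h (iota s) = f s) /\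
      (forall h' : M -> N, adequate_monoid_morph M N h' ->
         (forall s, h' (iota s) = f s) -> forall x, h' x = h x).

(* Main.v *)
Require Import Defs.
From Stdlib Require Import Arith Lia ProofIrrelevance.

Lemma nat_Rstar : forall x : nat, Rstar nat Nat.add 0 x.
Proof. intros x a b; destruct a, b; simpl; lia. Qed.
Lemma nat_Lstar : forall x : nat, Lstar nat Nat.add 0 x.
Proof. intros x a b; destruct a, b; simpl; lia. Qed.

Definition natAS : AdequateSemigroup :=
  {| carrier := nat; mul := Nat.add; plus := fun _ => 0; star := fun _ => 0;
     mulA := Nat.add_assoc;
     idem_comm := fun e f He Hf => ltac:(lia);
     plus_idem := fun _ => eq_refl;
     plus_Rstar := nat_Rstar;
     star_idem := fun _ => eq_refl;
     star_Lstar := nat_Lstar |}.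

Definition natAM : AdequateMonoid :=
  {| asg := natAS; one := (0 : natAS); mul1x := fun x => eq_refl; mulx1 := Nat.add_0_r |}.

Section Sub.
Variable (S : AdequateSemigroup) (P : S -> Prop).
Hypothesis Pm : forall x y, P x -> P y -> P (mul S x y).
Hypothesis Pp : forall x, P x -> P (plus S x).
Hypothesis Ps : forall x, P x -> P (star S x).

Definition SubT := {x : S | P x}.
Definition smul (a b : SubT) : SubT :=
  exist _ (mul S (proj1_sig a) (proj1_sig b)) (Pm _ _ (proj2_sig a) (proj2_sig b)).
Definition splus (a : SubT) : SubT := exist _ (plus S (proj1_sig a)) (Pp _ (proj2_sig a)).
Definition sstar (a : SubT) : SubT := exist _ (star S (proj1_sig a)) (Ps _ (proj2_sig a)).

Lemma sub_eq (a b : SubT) : proj1_sig a = proj1_sig b -> a = b.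
Proof.
  destruct a as [a pa], b as [b pb]; simpl; intros ->.
  f_equal; apply proof_irrelevance.
Qed.

Lemma proj_l (x : option SubT) (a : SubT) :
  proj1_sig (lmul1 SubT smul x a) = lmul1 S (mul S) (option_map (@proj1_sig _ _) x) (proj1_sig a).
Proof. destruct x; reflexivity. Qed.
Lemma proj_r (x : option SubT) (a : SubT) :
  proj1_sig (rmul1 SubT smul a x) = rmul1 S (mul S) (proj1_sig a) (option_map (@proj1_sig _ _) x).
Proof. destruct x; reflexivity. Qed.

Lemma sub_Rstar (a : SubT) : Rstar SubT smul (splus a) a.
Proof.
  intros x y. split; intro H.
  - apply sub_eq. rewrite !proj_l. apply (plus_Rstar S (proj1_sig a)).
    rewrite <- !(proj_l _ (splus a)). now rewrite H.
  - apply sub_eq. rewrite !proj_l. apply (plus_Rstar S (proj1_sig a)).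
    rewrite <- !(proj_l _ a). now rewrite H.
Qed.
Lemma sub_Lstar (a : SubT) : Lstar SubT smul (sstar a) a.
Proof.
  intros x y. split; intro H.
  - apply sub_eq. rewrite !proj_r. apply (star_Lstar S (proj1_sig a)).
    rewrite <- !(proj_r _ (sstar a)). now rewrite H.
  - apply sub_eq. rewrite !proj_r. apply (star_Lstar S (proj1_sig a)).
    rewrite <- !(proj_r _ a). now rewrite H.
Qed.

Definition SubAS : AdequateSemigroup.
Proof.
  refine {| carrier := SubT; mul := smul; plus := splus; star := sstar;
            plus_Rstar := sub_Rstar; star_Lstar := sub_Lstar |}.
  - intros; apply sub_eq; simpl; apply mulA.
  - intros e f He Hf; apply sub_eq; simpl; apply idem_comm.
    + exact (f_equal (@proj1_sig _ _) He).
    + exact (f_equal (@proj1_sig _ _) Hf).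
  - intros; apply sub_eq; simpl; apply plus_idem.
  - intros; apply sub_eq; simpl; apply star_idem.
Defined.
End Sub.

Lemma free_ind Sigma (S : AdequateSemigroup) iota
  (Hf : is_free_adequate_semigroup Sigma S iota) (P : S -> Prop)
  (Pm : forall x y, P x -> P y -> P (mul S x y))
  (Pp : forall x, P x -> P (plus S x))
  (Ps : forall x, P x -> P (star S x))
  (Pi : forall s, P (iota s)) : forall x, P x.
Proof.
  destruct (Hf (SubAS S P Pm Pp Ps) (fun s => exist _ (iota s) (Pi s)))
    as [h [[[hm [hp hs]] hi] _]].
  destruct (Hf S iota) as [h0 [_ Hu]].
  assert (e1 : forall x, proj1_sig (h x) = h0 x).
  { apply Hu.
    - split; [|split]; intros.
      + rewrite hm; reflexivity.
      + rewrite hp; reflexivity.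
      + rewrite hs; reflexivity.
    - intros s; rewrite hi; reflexivity. }
  assert (e2 : forall x, x = h0 x).
  { apply Hu; [split; [|split]; reflexivity | reflexivity]. }
  intros x. rewrite (e2 x), <- e1. exact (proj2_sig (h x)).
Qed.

Lemma free_ind_mon Sigma (M : AdequateMonoid) iota
  (Hf : is_free_adequate_monoid Sigma M iota) (P : M -> Prop)
  (Pm : forall x y, P x -> P y -> P (mul M x y))
  (Pp : forall x, P x -> P (plus M x))
  (Ps : forall x, P x -> P (star M x))
  (P1 : P (one M))
  (Pi : forall s, P (iota s)) : forall x, P x.
Proof.
  set (Sb := SubAS M P Pm Pp Ps).
  set (o := exist P (one M) P1 : Sb).
  assert (m1 : forall x : Sb, mul Sb o x = x) by (intros; apply sub_eq; apply mul1x).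
  assert (m2 : forall x : Sb, mul Sb x o = x) by (intros; apply sub_eq; apply mulx1).
  destruct (Hf {| asg := Sb; one := o; mul1x := m1; mulx1 := m2 |}
                (fun s => exist _ (iota s) (Pi s)))
    as [h [[[[hm [hp hs]] h1] hi] _]].
  destruct (Hf M iota) as [h0 [_ Hu]].
  assert (e1 : forall x, proj1_sig (h x) = h0 x).
  { apply Hu.
    - split; [split; [|split]; intros|].
      + simpl in hm; rewrite hm; reflexivity.
      + simpl in hp; rewrite hp; reflexivity.
      + simpl in hs; rewrite hs; reflexivity.
      + simpl in h1; rewrite h1; reflexivity.
    - intros s; simpl in hi; rewrite hi; reflexivity. }
  assert (e2 : forall x, x = h0 x).
  { apply Hu; [split; [split; [|split]|]; reflexivity | reflexivity]. }
  intros x. rewrite (e2 x), <- e1. exact (proj2_sig (h x)).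
Qed.

Section J.
Variable S : AdequateSemigroup.
Variable d : S -> nat.
Hypothesis dm : forall x y, d (mul S x y) = d x + d y.
Hypothesis di : forall x, d x = 0 -> mul S x x = x.

Definition d1 (x : option S) := match x with None => 0 | Some x => d x end.
Definition idem1 (x : option S) :=
  match x with None => True | Some x => mul S x x = x end.

Notation L := (lmul1 S (mul S)).
Notation R := (rmul1 S (mul S)).

Lemma dL x z : d (L x z) = d1 x + d z.
Proof. destruct x; simpl; [apply dm|reflexivity]. Qed.
Lemma dR x z : d (R z x) = d z + d1 x.
Proof. destruct x; simpl; [apply dm|lia]. Qed.
Lemma idem_of x : d1 x = 0 -> idem1 x.
Proof. destruct x; simpl; auto. Qed.

Lemma LL e z : idem1 e -> L e (L e z) = L e z.
Proof. destruct e; simpl; auto. intros H. rewrite mulA, H; reflexivity. Qed.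
Lemma RR e z : idem1 e -> R (R z e) e = R z e.
Proof. destruct e; simpl; auto. intros H. rewrite <- mulA, H; reflexivity. Qed.
Lemma LC e f z : idem1 e -> idem1 f -> L e (L f z) = L f (L e z).
Proof.
  destruct e, f; simpl; auto. intros H1 H2.
  rewrite !mulA, (idem_comm S _ _ H1 H2); reflexivity.
Qed.
Lemma RC e f z : idem1 e -> idem1 f -> R (R z e) f = R (R z f) e.
Proof.
  destruct e, f; simpl; auto. intros H1 H2.
  rewrite <- !mulA, (idem_comm S _ _ H1 H2); reflexivity.
Qed.
Lemma LR e f z : L e (R z f) = R (L e z) f.
Proof. destruct e, f; simpl; auto; apply mulA. Qed.

Lemma L4 e f z : idem1 e -> idem1 f -> L e (L f (L e (L f z))) = L e (L f z).
Proof.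
  intros He Hf. rewrite (LC f e (L f z) Hf He), (LL f _ Hf), (LL e _ He).
  reflexivity.
Qed.
Lemma R4 e f z : idem1 e -> idem1 f -> R (R (R (R z e) f) e) f = R (R z e) f.
Proof.
  intros He Hf. rewrite <- (RC e f (R z e) He Hf), (RR e _ He), (RR f _ Hf).
  reflexivity.
Qed.

Lemma J_triv : J_trivial S (mul S).
Proof.
  intros a b [[x [y Ha]] [x' [y' Hb]]].
  assert (Da := f_equal d Ha). assert (Db := f_equal d Hb).
  rewrite dL, dR in Da, Db.
  assert (ix : idem1 x) by (apply idem_of; lia).
  assert (iy : idem1 y) by (apply idem_of; lia).
  assert (ix' : idem1 x') by (apply idem_of; lia).
  assert (iy' : idem1 y') by (apply idem_of; lia).
  assert (Hb2 : b = L x' (L x (R (R b y) y'))).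
  { rewrite Hb at 1. rewrite Ha. rewrite <- LR. reflexivity. }
  assert (Hl : L x' (L x b) = b).
  { rewrite Hb2 at 1. rewrite (L4 x' x _ ix' ix). symmetry; exact Hb2. }
  assert (Hr : R (R b y) y' = b).
  { rewrite Hb2 at 1. rewrite <- !LR. rewrite (R4 y y' _ iy iy').
    symmetry; exact Hb2. }
  assert (Ex : L x b = b).
  { rewrite <- Hl at 1. rewrite (LC x x' _ ix ix'), (LL x _ ix). exact Hl. }
  assert (Ey : R b y = b).
  { rewrite <- Hr at 1. rewrite (RC y' y (R b y) iy' iy), (RR y b iy). exact Hr. }
  rewrite Ha, Ey. exact Ex.
Qed.
End J.

Theorem theorem7p2 :
  (forall (Sigma : Type) (S : AdequateSemigroup) (iota : Sigma -> S),
      is_free_adequate_semigroup Sigma S iota -> J_trivial S (mul S)) /\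
  (forall (Sigma : Type) (M : AdequateMonoid) (iota : Sigma -> M),
      is_free_adequate_monoid Sigma M iota -> J_trivial M (mul M)).
Proof.
  split.
  - intros Sigma S iota Hf.
    destruct (Hf natAS (fun _ => 1 : natAS)) as [h [[[hm [hp hs]] hi] _]].
    apply (J_triv S h); [exact hm|].
    apply (free_ind Sigma S iota Hf (fun x => h x = 0 -> mul S x x = x)).
    + intros x y Hx Hy H. assert (E : h (mul S x y) = h x + h y) by apply hm.
      rewrite E in H. rewrite <- (Hx ltac:(lia)) at 3. rewrite <- (Hy ltac:(lia)) at 3.
      rewrite !mulA. rewrite <- (mulA S x y x).
      rewrite (idem_comm S y x (Hy ltac:(lia)) (Hx ltac:(lia))).
      rewrite !mulA. reflexivity.
    + intros; apply plus_idem.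
    + intros; apply star_idem.
    + intros s H. rewrite hi in H. discriminate.
  - intros Sigma M iota Hf.
    destruct (Hf natAM (fun _ => 1 : natAM)) as [h [[[[hm [hp hs]] h1] hi] _]].
    apply (J_triv M h); [exact hm|].
    apply (free_ind_mon Sigma M iota Hf (fun x => h x = 0 -> mul M x x = x)).
    + intros x y Hx Hy H. assert (E : h (mul M x y) = h x + h y) by apply hm.
      rewrite E in H. rewrite <- (Hx ltac:(lia)) at 3. rewrite <- (Hy ltac:(lia)) at 3.
      rewrite !mulA. rewrite <- (mulA M x y x).
      rewrite (idem_comm M y x (Hy ltac:(lia)) (Hx ltac:(lia))).
      rewrite !mulA. reflexivity.
    + intros; apply plus_idem.
    + intros; apply star_idem.
    + intros; apply mul1x.
    + intros s H. rewrite hi in H. discriminate.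
Qed.
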